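(* Let $P,X,Y\in\Sigma^*$ and $A=PX$, $B=PY$. Then $\mathrm{MCS}(A,B)=\{PZ : Z\in\mathrm{MCS}(X,Y)\}$.
   Context: $\mathrm{MCS}(A,B)$ denotes the set of minimal common supersequences of $A$ and $B$: strings $C$ with $A$ and $B$ both (not necessarily contiguous) subsequences of $C$, such that no proper subsequence of $C$ has this property. $PX$ denotes concatenation. *)

(* Defs.v *)
From mathcomp Require Import all_boot.
Set Implicit Arguments. Unset Strict Implicit. Unset Printing Implicit Defensive.

(* Strings over an alphabet Sigma are sequences [seq Sigma] over an eqType;
   "not necessarily contiguous subsequence" is MathComp's [subseq]. *)

Definition common_superseq (Sigma : eqType) (A B C : seq Sigma) : bool :=
  subseq A C && subseq B C.

Definition is_MCS (Sigma : eqType) (A B C : seq Sigma) : Prop :=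
  common_superseq A B C /\
  forall D : seq Sigma, subseq D C -> D != C -> ~~ common_superseq A B D.

(* Main.v *)
Require Import Defs.
From mathcomp Require Import all_boot.

Lemma sub_cc (T:eqType) (x:T) s1 s2 : subseq (x::s1) (x::s2) = subseq s1 s2.
Proof. by rewrite /= eqxx. Qed.
Lemma sub_cn (T:eqType) (x y:T) s1 s2 : x != y -> subseq (x::s1) (y::s2) = subseq (x::s1) s2.
Proof. by move=> h; rewrite /= (negbTE h). Qed.

Lemma mcs_cons (T : eqType) (a : T) (X Y C : seq T) :
  is_MCS (a :: X) (a :: Y) C <-> exists2 Z, is_MCS X Y Z & C = a :: Z.
Proof.
split.
- case=> /andP [hX hY] hmin.
  case: C hX hY hmin => [|c C'] hX hY hmin; first by [].
  have [eca|nca] := eqVneq c a.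
  + subst c; exists C' => //; split.
      by rewrite /common_superseq -(sub_cc _ a) hX -(sub_cc _ a) hY.
    move=> D sD nD; apply/negP => /andP [dX dY].
    have := hmin (a :: D); rewrite sub_cc sD => /(_ isT).
    rewrite eqseq_cons eqxx /= (negbTE nD) => /(_ isT).
    by rewrite /common_superseq !sub_cc dX dY.
  + rewrite sub_cn 1?eq_sym // in hX; rewrite sub_cn 1?eq_sym // in hY.
    have := hmin C' (subseq_cons C' c).
    have -> : C' != c :: C'.
      by apply/negP => /eqP h; have := congr1 size h => /= /eqP; rewrite eqn_leq ltnn andbF.
    by move=> /(_ isT); rewrite /common_superseq hX hY.
- case=> Z [/andP [zX zY] zmin] ->; split.
    by rewrite /common_superseq !sub_cc zX zY.
  move=> D sD nD; apply/negP => /andP [dX dY].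
  case: D sD nD dX dY => [|d D'] sD nD dX dY; first by [].
  have [eda|nda] := eqVneq d a.
  + subst d; rewrite sub_cc in sD; rewrite sub_cc in dX; rewrite sub_cc in dY.
    rewrite eqseq_cons eqxx /= in nD.
    by have := zmin D' sD nD; rewrite /common_superseq dX dY.
  + rewrite sub_cn // in sD.
    rewrite sub_cn 1?eq_sym // in dX; rewrite sub_cn 1?eq_sym // in dY.
    have sD' : subseq D' Z := subseq_trans (subseq_cons D' d) sD.
    have nD' : D' != Z.
      apply/negP => /eqP h; subst D'; have := size_subseq sD => /=.
      by rewrite ltnn.
    have := zmin D' sD' nD'.
    by rewrite /common_superseq (subseq_trans (subseq_cons X a) dX)
               (subseq_trans (subseq_cons Y a) dY).
Qed.

Theorem mainTheorem7 (Sigma : eqType) (P X Y : seq Sigma) :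
  forall C : seq Sigma,
    is_MCS (P ++ X) (P ++ Y) C <-> exists2 Z : seq Sigma, is_MCS X Y Z & C = P ++ Z.
Proof.
elim: P => [|a P IH] C /=.
  by split; [move=> h; exists C | case=> Z h ->].
split.
- move/mcs_cons=> [W /IH [Z hZ ->] ->]; by exists Z.
- case=> Z hZ ->; apply/mcs_cons; exists (P ++ Z) => //; apply/IH; by exists Z.
Qed.
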